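(* Let $\lambda_k,\varphi_k$ ($k=1,\dots,n$) be nonnegative integrable random variables on a probability space, and put $\lambda_0=0$. (i) If $\lambda_k=\mathbb{E}\sqrt{\varphi_k^2+\lambda_{k-1}^2}$ for $k=1,\dots,n$, then \[\max\big(\|(\varphi_k)_{k=1}^n\|_{L^1(\ell^2)},\|(\varphi_k)_{k=1}^n\|_{\mathrm{ind}}\big)\le2\lambda_n.\] (ii) If $\mathbb{E}\lambda_k\ge\mathbb{E}\sqrt{\varphi_k^2+\lambda_{k-1}^2}$ for $k=1,\dots,n$ and the $\lambda_k$ are bounded, then \[\max\big(\|(\varphi_k)_{k=1}^n\|_{L^1(\ell^2)},\|(\varphi_k)_{k=1}^n\|_{\mathrm{ind}}\big)\le(1+2^{1/2})\sqrt{\mathbb{E}\lambda_n}\sqrt{\max_{1\le k\le n}\sup\lambda_k}.\]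
   Context: For random variables $g_1,\dots,g_n$ on a probability space $(\Omega,\mu)$: $\|(g_k)\|_{L^1(\ell^2)}=\mathbb{E}(\sum_k|g_k|^2)^{1/2}$ and $\|(g_k)\|_{\mathrm{ind}}=\int_{\Omega^n}(\sum_k|g_k(\omega_k)|^2)^{1/2}d\mu(\omega_1)\cdots d\mu(\omega_n)$. In (i) the $\lambda_k$ are constants (for $k\ge1$). *)

(* Defs.v *)
From HB Require Import structures.
From mathcomp Require Import all_boot all_order all_algebra.
From mathcomp Require Import all_classical all_reals all_analysis.
Set Implicit Arguments. Unset Strict Implicit. Unset Printing Implicit Defensive.
Import Order.TTheory GRing.Theory Num.Theory.
Local Open Scope ring_scope.
Local Open Scope classical_set_scope.

Section Norms.
Context {d : measure_display} {T : measurableType d} {R : realType}.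
Variable mu : {measure set T -> \bar R}.

Definition L1l2_norm (g : nat -> T -> R) (n : nat) : \bar R :=
  (\int[mu]_x (Num.sqrt (\sum_(1 <= k < n.+1) `|g k x| ^+ 2))%:E)%E.

Fixpoint ind_iter (g : nat -> T -> R) (ks : seq nat) (s : R) : \bar R :=
  match ks with
  | [::] => (Num.sqrt s)%:E
  | k :: ks' => (\int[mu]_x ind_iter g ks' (s + `|g k x| ^+ 2))%E
  end.

(* || (g_k)_{k=1}^n ||_ind = int_{Omega^n} (sum_k |g_k(omega_k)|^2)^{1/2}
   d mu(omega_1) ... d mu(omega_n)  (as an iterated integral) *)
Definition ind_norm (g : nat -> T -> R) (n : nat) : \bar R :=
  ind_iter g (iota 1 n) 0.

End Norms.

(* Main.v *)
Require Import Defs.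
From HB Require Import structures.
From mathcomp Require Import all_boot all_order all_algebra.
From mathcomp Require Import all_classical all_reals all_analysis.
From mathcomp Require Import ring lra.
Import Order.TTheory GRing.Theory Num.Theory.
Local Open Scope ring_scope.
Local Open Scope classical_set_scope.
Lemma sqrt_le_of (R : realType) (s y : R) : 0 <= y -> s <= y ^+ 2 -> Num.sqrt s <= y.
Proof.
move=> y0 sy; have <- : Num.sqrt (y ^+ 2) = y by rewrite sqrtr_sqr ger0_norm.
by rewrite ler_sqrt // sqr_ge0.
Qed.

Lemma sqrt_bound {R : realType} {s a b c : R} : 0 < c -> 0 <= a -> 0 <= b ->
  s <= a ^+ 2 + b -> Num.sqrt s <= a + b * (2 * c)^-1 + c / 2.
Proof.
move=> c0 a0 b0 sab.
have hb : Num.sqrt b <= b * (2 * c)^-1 + c / 2.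
  set t := Num.sqrt b.
  have t0 : 0 <= t by exact: sqrtr_ge0.
  have tb : t ^+ 2 = b by rewrite sqr_sqrtr.
  rewrite -tb.
  have -> : t ^+ 2 * (2 * c)^-1 + c / 2 = (t ^+ 2 + c ^+ 2) / (2 * c).
    field; lra.
  rewrite ler_pdivlMr; last lra.
  have := sqr_ge0 (t - c); nra.
have t0 : 0 <= Num.sqrt b by exact: sqrtr_ge0.
have tb : Num.sqrt b ^+ 2 = b by rewrite sqr_sqrtr.
apply: le_trans (_ : a + Num.sqrt b <= _); last lra.
apply: sqrt_le_of; first lra.
nra.
Qed.
Section S.
Context (d : measure_display) (T : measurableType d) (R : realType) (P : probability T R).

Lemma le_int_nm (f g : T -> \bar R) : (forall x, (0 <= f x)%E) ->
  (forall x, (f x <= g x)%E) -> (\int[P]_x f x <= \int[P]_x g x)%E.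
Proof.
move=> f0 fg.
rewrite ge0_integralTE // ge0_integralTE; last by move=> x; exact: le_trans (f0 x) (fg x).
apply: ereal_sup_le => _ [h hf <-]; exists h => //= x.
exact: le_trans (hf x) (fg x).
Qed.

Lemma int_cstP (r : R) : (\int[P]_x (r%:E) = r%:E)%E.
Proof.
have := integral_cst P measurableT r%:E; rewrite /cst => ->.
rewrite -[RHS]mule1; congr (_ * _)%E; exact: probability_setT.
Qed.

Lemma intcst_integrable (r : R) : P.-integrable setT (fun _ => r%:E).
Proof. exact: (finite_measure_integrable_cst P r measurableT). Qed.

Lemma int_lin3 (h f g : T -> R) (H F G K : R) :
  P.-integrable setT (EFin \o h) ->
  P.-integrable setT (EFin \o f) -> P.-integrable setT (EFin \o g) ->
  (\int[P]_x (h x)%:E = H%:E)%E ->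
  (\int[P]_x (f x)%:E = F%:E)%E -> (\int[P]_x (g x)%:E = G%:E)%E ->
  P.-integrable setT (EFin \o (fun x => h x + f x + g x * K)) /\
  (\int[P]_x (h x + f x + g x * K)%:E = (H + F + G * K)%:E)%E.
Proof.
move=> inth intf intg hh hf hg.
have iK : P.-integrable setT (fun x => K%:E * (g x)%:E)%E.
  exact: integrableZl.
have iCf : P.-integrable setT (fun x => (h x)%:E + (f x)%:E)%E.
  exact: (integrableD measurableT inth intf).
have E1 : (fun x => (h x + f x + g x * K)%:E) = (fun x => ((h x)%:E + (f x)%:E) + K%:E * (g x)%:E)%E.
  by apply/funext => x; rewrite -EFinM -!EFinD mulrC.
split.
  rewrite /comp E1; exact: (integrableD measurableT iCf iK).
rewrite E1.
rewrite (integralD measurableT iCf iK) (integralD measurableT inth intf).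
rewrite integralZl // hh hf hg.
by rewrite -EFinM -!EFinD mulrC.
Qed.

Lemma int_lin (f g : T -> R) (F G C K : R) :
  P.-integrable setT (EFin \o f) -> P.-integrable setT (EFin \o g) ->
  (\int[P]_x (f x)%:E = F%:E)%E -> (\int[P]_x (g x)%:E = G%:E)%E ->
  (\int[P]_x (C + f x + g x * K)%:E = (C + F + G * K)%:E)%E.
Proof.
move=> intf intg hf hg.
have iK : P.-integrable setT (fun x => K%:E * (g x)%:E)%E.
  exact: integrableZl.
have iCf : P.-integrable setT (fun x => C%:E + (f x)%:E)%E.
  exact: (integrableD measurableT (intcst_integrable C) intf).
rewrite (_ : (fun x => (C + f x + g x * K)%:E) = (fun x => (C%:E + (f x)%:E) + K%:E * (g x)%:E)%E); last first.
  by apply/funext => x; rewrite -EFinM -!EFinD mulrC.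
rewrite (integralD measurableT iCf iK) (integralD measurableT (intcst_integrable C) intf).
rewrite integralZl // int_cstP hf hg.
by rewrite -EFinM -!EFinD mulrC.
Qed.


Variables (phi dd ee : nat -> T -> R) (D E : nat -> R) (c : R).
Hypothesis c0 : 0 < c.

Definition Hk k := [/\ P.-integrable setT (EFin \o dd k),
  P.-integrable setT (EFin \o ee k),
  (\int[P]_x (dd k x)%:E = (D k)%:E)%E,
  (\int[P]_x (ee k x)%:E = (E k)%:E)%E &
  forall x, [/\ 0 <= dd k x, 0 <= ee k x & `|phi k x| ^+ 2 <= dd k x ^+ 2 + ee k x]].

Lemma ind_iter_ge0 ks s : (0 <= ind_iter P phi ks s)%E.
Proof.
elim: ks s => [|k ks IH] s /=; first by rewrite lee_fin sqrtr_ge0.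
by apply: integral_ge0 => x _; exact: IH.
Qed.

Lemma ind_bound ks : (forall k, k \in ks -> Hk k) ->
  forall s a b, 0 <= a -> 0 <= b -> s <= a ^+ 2 + b ->
  (ind_iter P phi ks s <= (a + \sum_(k <- ks) D k +
     (b + \sum_(k <- ks) E k) * (2 * c)^-1 + c / 2)%:E)%E.
Proof.
elim: ks => [|k ks IH] Hks s a b a0 b0 sab /=.
  by rewrite !big_nil !addr0 lee_fin; exact: sqrt_bound.
have [idk iek hD hE hx] := Hks k (mem_head _ _).
have IH' : forall s a b, 0 <= a -> 0 <= b -> s <= a ^+ 2 + b -> _ := IH (fun j hj => Hks j ltac:(by rewrite in_cons hj orbT)).
set C := a + \sum_(j <- ks) D j + (b + \sum_(j <- ks) E j) * (2 * c)^-1 + c / 2.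
apply: le_trans (_ : (\int[P]_x (C + dd k x + ee k x * (2 * c)^-1)%:E <= _)%E).
  apply: le_int_nm; first by move=> x; exact: ind_iter_ge0.
  move=> x; have [d0 e0 pde] := hx x.
  apply: le_trans (IH' _ (a + dd k x) (b + ee k x) _ _ _) _.
  - lra.
  - lra.
  - nra.
  - rewrite lee_fin /C; lra.
rewrite (@int_lin (dd k) (ee k) (D k) (E k) C (2*c)^-1 idk iek hD hE) lee_fin /C !big_cons.
by rewrite le_eqVlt; apply/orP; left; apply/eqP; ring.
Qed.

Lemma int_sum ks : (forall k, k \in ks -> Hk k) ->
  forall (g : T -> R) G, P.-integrable setT (EFin \o g) ->
  (\int[P]_x (g x)%:E = G%:E)%E ->
  (\int[P]_x (g x + \sum_(k <- ks) (dd k x + ee k x * (2 * c)^-1))%:E =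
    (G + \sum_(k <- ks) (D k + E k * (2 * c)^-1))%:E)%E.
Proof.
elim: ks => [|k ks IH] Hks g G ig hg.
  by under eq_integral do rewrite big_nil addr0; rewrite big_nil addr0.
have [idk iek hD hE hx] := Hks k (mem_head _ _).
have IH' := IH (fun j hj => Hks j ltac:(by rewrite in_cons hj orbT)).
have [i2 h2] := @int_lin3 _ _ _ _ _ _ ((2 * c)^-1) ig idk iek hg hD hE.
have := IH' _ _ i2 h2.
rewrite big_cons !addrA => <-.
by apply: eq_integral => x _; rewrite big_cons !addrA.
Qed.

Lemma sum_sq_bound ks x : (forall k, k \in ks -> Hk k) ->
  \sum_(k <- ks) `|phi k x| ^+ 2 <=
  (\sum_(k <- ks) dd k x) ^+ 2 + \sum_(k <- ks) ee k x.
Proof.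
elim: ks => [|k ks IH] Hks; first by rewrite !big_nil expr0n /= addr0.
have [_ _ _ _ hx] := Hks k (mem_head _ _).
have [d0 e0 pde] := hx x.
have := IH (fun j hj => Hks j ltac:(by rewrite in_cons hj orbT)).
have A0 : 0 <= \sum_(j <- ks) dd j x.
  rewrite big_seq; apply: sumr_ge0 => j hj.
  by have [_ _ _ _ /(_ x) []] := Hks j ltac:(by rewrite in_cons hj orbT).
rewrite !big_cons; nra.
Qed.

Lemma L1_bound ks : (forall k, k \in ks -> Hk k) ->
  (\int[P]_x (Num.sqrt (\sum_(k <- ks) `|phi k x| ^+ 2))%:E <=
   (\sum_(k <- ks) D k + (\sum_(k <- ks) E k) * (2 * c)^-1 + c / 2)%:E)%E.
Proof.
move=> Hks.
apply: le_trans (_ : (\int[P]_x (c / 2 + \sum_(k <- ks) (dd k x + ee k x * (2 * c)^-1))%:E <= _)%E).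
  apply: le_int_nm => x; first by rewrite lee_fin sqrtr_ge0.
  rewrite lee_fin big_split /= -mulr_suml.
  have A0 : 0 <= \sum_(j <- ks) dd j x.
    rewrite big_seq; apply: sumr_ge0 => i hi; by have [_ _ _ _ /(_ x) [? ? ?]] := Hks i hi.
  have B0 : 0 <= \sum_(j <- ks) ee j x.
    rewrite big_seq; apply: sumr_ge0 => i hi; by have [_ _ _ _ /(_ x) [? ? ?]] := Hks i hi.
  have := sqrt_bound c0 A0 B0 (@sum_sq_bound ks x Hks); lra.
rewrite (@int_sum ks Hks _ _ (intcst_integrable _) (int_cstP _)) lee_fin.
rewrite big_split /= -mulr_suml; lra.
Qed.

End S.

Section M.
Context (d : measure_display) (T : measurableType d) (R : realType) (P : probability T R).

Lemma mkHk (f g : T -> R) (w : R) :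
  measurable_fun setT f -> P.-integrable setT (EFin \o f) -> (forall x, 0 <= f x) ->
  measurable_fun setT g -> P.-integrable setT (EFin \o g) -> (forall x, 0 <= g x <= w) ->
  [/\ P.-integrable setT (EFin \o (fun x => Num.sqrt (f x ^+ 2 + g x ^+ 2) - g x)),
   P.-integrable setT (EFin \o (fun x => 2 * w * (Num.sqrt (f x ^+ 2 + g x ^+ 2) - g x))),
   (\int[P]_x (Num.sqrt (f x ^+ 2 + g x ^+ 2) - g x)%:E =
      (fine (\int[P]_x (Num.sqrt (f x ^+ 2 + g x ^+ 2) - g x)%:E))%:E)%E,
   (\int[P]_x (2 * w * (Num.sqrt (f x ^+ 2 + g x ^+ 2) - g x))%:E =
      (2 * w * fine (\int[P]_x (Num.sqrt (f x ^+ 2 + g x ^+ 2) - g x)%:E))%:E)%E &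
   ((forall x, [/\ 0 <= Num.sqrt (f x ^+ 2 + g x ^+ 2) - g x,
      0 <= 2 * w * (Num.sqrt (f x ^+ 2 + g x ^+ 2) - g x) &
      `|f x| ^+ 2 <= (Num.sqrt (f x ^+ 2 + g x ^+ 2) - g x) ^+ 2 +
                     2 * w * (Num.sqrt (f x ^+ 2 + g x ^+ 2) - g x)]) /\
   (\int[P]_x (Num.sqrt (f x ^+ 2 + g x ^+ 2) - g x)%:E =
      \int[P]_x (Num.sqrt (f x ^+ 2 + g x ^+ 2))%:E - \int[P]_x (g x)%:E)%E)].
Proof.
move=> mf itf f0 mg itg g0.
set s := fun x => Num.sqrt (f x ^+ 2 + g x ^+ 2).
have ms : measurable_fun setT s.
  apply: (measurableT_comp (measurable_realfun.continuous_measurable_fun (@sqrt_continuous R))).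
  apply: measurable_realfun.measurable_funD; exact: measurable_realfun.measurable_funX.
have sfg x : s x <= f x + g x.
  have := f0 x; have /andP[g0x _] := g0 x.
  move=> f0x; apply: sqrt_le_of; nra.
have gs x : g x <= s x.
  have /andP[g0x _] := g0 x.
  rewrite -[g x]ger0_norm // -sqrtr_sqr /s ler_sqrt; last by rewrite addr_ge0 // sqr_ge0.
  by rewrite lerDr sqr_ge0.
have its : P.-integrable setT (EFin \o s).
  apply: (le_integrable measurableT _ _ (integrableD measurableT itf itg)).
    exact/measurable_realfun.measurable_EFinP.
  move=> x _ /=; rewrite lee_fin.
  have /andP[g0x _] := g0 x; have := f0 x => f0x.
  rewrite (ger0_norm (sqrtr_ge0 _)) ger0_norm; [exact: sfg | exact: addr_ge0].
have itd : P.-integrable setT (EFin \o (fun x => s x - g x)).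
  exact: (integrableB measurableT its itg).
have fin : (\int[P]_x (s x - g x)%:E)%E \is a fin_num by exact: integrable_fin_num.
have E2 : (EFin \o (fun x => 2 * w * (s x - g x))) = (fun x => (2 * w)%:E * (s x - g x)%:E)%E.
  by apply/funext => x /=; rewrite EFinM.
split.
- exact: itd.
- by rewrite E2; exact: integrableZl.
- by rewrite fineK.
- have := E2; rewrite /comp => ->.
  rewrite integralZl //; move: fin; rewrite /s => fin; by rewrite [RHS]EFinM fineK.
split.
- move=> x; have /andP[g0x gw] := g0 x; have := gs x => gsx.
  have ss : s x ^+ 2 = f x ^+ 2 + g x ^+ 2 by rewrite sqr_sqrtr // addr_ge0 // sqr_ge0.
  have w0 : 0 <= w by exact: le_trans gw.
  move: gsx ss; rewrite /s => gsx ss.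
  split; [lra | apply: mulr_ge0; lra | ].
  rewrite ger0_norm ?f0 //; nra.
- exact: (integralB_EFin measurableT its itg).
Qed.

End M.

Lemma tele (R : realType) (f : nat -> R) m n :
  \sum_(k <- iota m n) (f k - f k.-1) = f (m + n).-1 - f m.-1.
Proof.
elim: n m => [|n IH] m /=; first by rewrite big_nil addn0 subrr.
rewrite big_cons IH addSnnS /=.
have -> : (m + n.+1).-1 = (m.+1 + n).-1 by rewrite addSnnS.
by rewrite addrC addrA subrK.
Qed.

Lemma finish (R : realType) (X : \bar R) (A Q : R) : 0 <= Q ->
  (forall c, 0 < c -> (X <= (A + Q * (2 * c)^-1 + c / 2)%:E)%E) ->
  (X <= (A + Num.sqrt Q)%:E)%E.
Proof.
move=> Q0 H; have [Qp|] := ltrP 0 Q.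
  have sq0 : 0 < Num.sqrt Q by rewrite sqrtr_gt0.
  apply: le_trans (H _ sq0) _; rewrite lee_fin.
  have sQ : Num.sqrt Q ^+ 2 = Q by rewrite sqr_sqrtr.
  rewrite -{1}sQ.
  have -> : Num.sqrt Q ^+ 2 * (2 * Num.sqrt Q)^-1 = Num.sqrt Q / 2.
    by field; rewrite gt_eqF.
  lra.
move=> Qle; have Qz : Q = 0 by apply/eqP; rewrite eq_le Qle Q0.
rewrite Qz in H *.
rewrite sqrtr0 addr0; apply/lee_addgt0Pr => e e0.
apply: le_trans (H (2 * e) _) _; first lra.
rewrite mul0r addr0 -EFinD lee_fin; lra.
Qed.

Lemma key (d : measure_display) (T : measurableType d) (R : realType)
  (P : probability T R) n (phi dd ee : nat -> T -> R) (D E : nat -> R) (c : R) :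
  0 < c -> (forall k, k \in iota 1 n -> @Hk _ _ _ P phi dd ee D E k) ->
  (maxe (L1l2_norm P phi n) (ind_norm P phi n) <=
   (\sum_(k <- iota 1 n) D k + (\sum_(k <- iota 1 n) E k) * (2 * c)^-1 + c / 2)%:E)%E.
Proof.
move=> c0 HK; rewrite ge_max; apply/andP; split.
  have := (@L1_bound _ _ _ P phi dd ee D E c c0 _ HK). by rewrite /L1l2_norm /index_iota subSS subn0.
have := @ind_bound _ _ _ P phi dd ee D E c c0 _ HK 0 0 0 (lexx _) (lexx _).
rewrite expr0n /= addr0 lexx => /(_ isT).
by rewrite add0r add0r.
Qed.

Theorem lemma1p5 (d : measure_display) (T : measurableType d) (R : realType)
  (P : probability T R) (n : nat) (phi : nat -> T -> R) :
  (forall k, (1 <= k <= n)%N ->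
     measurable_fun setT (phi k) /\ P.-integrable setT (EFin \o phi k) /\
     (forall x, 0 <= phi k x)) ->
  (* (i) the lambda_k are constants *)
  (forall lam : nat -> R,
     lam 0%N = 0 ->
     (forall k, (1 <= k <= n)%N -> 0 <= lam k) ->
     (forall k, (1 <= k <= n)%N ->
        (lam k)%:E =
        (\int[P]_x (Num.sqrt (phi k x ^+ 2 + lam k.-1 ^+ 2))%:E)%E) ->
     (maxe (L1l2_norm P phi n) (ind_norm P phi n) <= (2 * lam n)%:E)%E) /\
  (* (ii) *)
  (forall lam : nat -> T -> R,
     (forall x, lam 0%N x = 0) ->
     (forall k, (1 <= k <= n)%N ->
        measurable_fun setT (lam k) /\ P.-integrable setT (EFin \o lam k) /\
        (forall x, 0 <= lam k x)) ->
     (forall k, (1 <= k <= n)%N -> exists M : R, forall x, `|lam k x| <= M) ->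
     (forall k, (1 <= k <= n)%N ->
        (\int[P]_x (Num.sqrt (phi k x ^+ 2 + lam k.-1 x ^+ 2))%:E
           <= \int[P]_x (lam k x)%:E)%E) ->
     (maxe (L1l2_norm P phi n) (ind_norm P phi n) <=
        ((1 + Num.sqrt 2) * Num.sqrt (fine (\int[P]_x (lam n x)%:E)%E)
          * Num.sqrt (\big[Num.max/0]_(1 <= k < n.+1) sup (range (lam k))))%:E)%E).
Proof.
Proof.
move=> Hphi; split.
- move=> lam l0 lpos hlam.
  have lp k : (k <= n)%N -> 0 <= lam k.
    by case: k => [|k] kn; [rewrite l0 | apply: lpos; rewrite kn].
  pose DD k x := Num.sqrt (phi k x ^+ 2 + (fun _ : T => lam k.-1) x ^+ 2) - (fun _ : T => lam k.-1) x.
  pose EE k x := 2 * lam k.-1 * DD k x.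
  pose Df k := fine (\int[P]_x (DD k x)%:E).
  pose Ef k := 2 * lam k.-1 * Df k.
  have facts k : k \in iota 1 n -> @Hk _ _ _ P phi DD EE Df Ef k /\ Df k = lam k - lam k.-1.
    rewrite mem_iota => /andP[k1 kn].
    have kn' : (1 <= k <= n)%N by rewrite k1 -ltnS.
    have [mf [itf f0]] := Hphi k kn'.
    have lk1 : 0 <= lam k.-1 by apply: lp; apply: leq_trans (leq_pred _) _; rewrite -ltnS.
    have := @mkHk _ _ _ P (phi k) (fun _ => lam k.-1) (lam k.-1) mf itf f0
      (measurable_cst _) (@intcst_integrable _ _ _ P _) (fun x => ltac:(by rewrite lk1 lexx)).
    case=> i1 i2 i3 i4 [i5 i6]; split; first by split.
    rewrite /Df i6 (@int_cstP _ _ _ P) -(hlam k kn') /=.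
    by [].
  have key' c : 0 < c -> (maxe (L1l2_norm P phi n) (ind_norm P phi n) <=
     (lam n + lam n ^+ 2 * (2 * c)^-1 + c / 2)%:E)%E.
    move=> c0; apply: le_trans (@key _ _ _ P n phi DD EE Df Ef c c0 (fun k hk => (facts k hk).1)) _.
    rewrite lee_fin.
    have SD : \sum_(k <- iota 1 n) Df k = lam n.
      rewrite (eq_big_seq (fun k => lam k - lam k.-1)); last by move=> k /facts [].
      by rewrite tele l0 subr0.
    have SE : \sum_(k <- iota 1 n) Ef k <= lam n ^+ 2.
      rewrite (eq_big_seq (fun k => 2 * lam k.-1 * (lam k - lam k.-1))); last first.
        by move=> k /facts [_ h]; rewrite /Ef h.
      apply: le_trans (_ : \sum_(k <- iota 1 n) (lam k ^+ 2 - lam k.-1 ^+ 2) <= _).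
        by apply: ler_sum => k _; have := sqr_ge0 (lam k - lam k.-1); nra.
      by rewrite (@tele _ (fun k => lam k ^+ 2)) /= l0 expr0n subr0.
    have k0 : 0 <= (2 * c)^-1 by rewrite invr_ge0; lra.
    rewrite SD; have := ler_wpM2r k0 SE; lra.
  have := @finish _ _ _ _ (sqr_ge0 (lam n)) key'.
  by rewrite sqrtr_sqr ger0_norm ?lp // -mulr2n mulr_natl.
- move=> lam l0 hl hb hint.
  set M := \big[Num.max/0]_(1 <= k < n.+1) sup (range (lam k)).
  have hl' j : (j <= n)%N -> [/\ measurable_fun setT (lam j),
      P.-integrable setT (EFin \o lam j) & forall x, 0 <= lam j x].
    case: j => [|j] jn.
      have -> : lam 0%N = fun _ => 0 by apply/funext => x; rewrite l0.
      split; [exact: measurable_cst | exact: (@intcst_integrable _ _ _ P 0) | by []].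
    by have [? [? ?]] := hl j.+1 jn; split.
  have M0 : 0 <= M.
    rewrite /M; elim: (index_iota 1 n.+1) => [|i r IH]; first by rewrite big_nil.
    by rewrite big_cons le_max IH orbT.
  have lM j x : (j <= n)%N -> lam j x <= M.
    case: j => [_|j jn]; first by rewrite l0.
    have [Mj hMj] := hb j.+1 jn.
    apply: le_trans (_ : sup (range (lam j.+1)) <= M).
      have hub : has_ubound (range (lam j.+1)).
        exists Mj => _ [y _ <-]; exact: le_trans (ler_norm _) (hMj y).
      by apply: (@ub_le_sup R _ hub); exists x.
    rewrite /M; apply: (le_bigmax_seq _ _ (fun _ => true) (fun k => sup (range (lam k)))) => //.
    by rewrite mem_index_iota.
  pose L j := fine (\int[P]_x (lam j x)%:E).
  have Lint j : (j <= n)%N -> (\int[P]_x (lam j x)%:E = (L j)%:E)%E.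
    move=> jn; have [_ ij _] := hl' j jn.
    by rewrite /L fineK //; exact: integrable_fin_num.
  have L0 : L 0%N = 0.
    rewrite /L (_ : lam 0%N = fun _ => 0); last by apply/funext => x; rewrite l0.
    by rewrite (@int_cstP _ _ _ P 0).
  pose DD k x := Num.sqrt (phi k x ^+ 2 + lam k.-1 x ^+ 2) - lam k.-1 x.
  pose EE k x := 2 * M * DD k x.
  pose Df k := fine (\int[P]_x (DD k x)%:E).
  pose Ef k := 2 * M * Df k.
  have facts k : k \in iota 1 n -> @Hk _ _ _ P phi DD EE Df Ef k /\ Df k <= L k - L k.-1.
    rewrite mem_iota => /andP[k1 kn].
    have kn' : (1 <= k <= n)%N by rewrite k1 -ltnS.
    have kn'' : (k <= n)%N by rewrite -ltnS.
    have k1n : (k.-1 <= n)%N by apply: leq_trans (leq_pred _) _; rewrite -ltnS.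
    have [mf [itf f0]] := Hphi k kn'.
    have [mg ig g0] := hl' _ k1n.
    have := @mkHk _ _ _ P (phi k) (lam k.-1) M mf itf f0 mg ig
      (fun x => ltac:(by rewrite g0 lM)).
    case=> i1 i2 i3 i4 [i5 i6]; split; first by split.
    have sle := hint k kn'.
    rewrite (Lint _ kn'') in sle.
    have s0 : (0 <= \int[P]_x (Num.sqrt (phi k x ^+ 2 + lam k.-1 x ^+ 2))%:E)%E.
      by apply: integral_ge0 => x _; rewrite lee_fin sqrtr_ge0.
    have sfin : (\int[P]_x (Num.sqrt (phi k x ^+ 2 + lam k.-1 x ^+ 2))%:E)%E \is a fin_num.
      by rewrite ge0_fin_numE //; apply: le_lt_trans sle _; exact: ltey.
    have hD : (Df k)%:E = ((fine (\int[P]_x (Num.sqrt (phi k x ^+ 2 + lam k.-1 x ^+ 2))%:E)) - L k.-1)%:E.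
      by rewrite /Df -i3 i6 EFinB (fineK sfin) (Lint _ k1n).
    have hD2 := EFin_inj hD; rewrite hD2.
    by rewrite lerD2r -lee_fin (fineK sfin).
  have Ln0 : 0 <= L n by rewrite /L fine_ge0 // integral_ge0 // => x _; rewrite lee_fin; have [_ _ ->] := hl' n (leqnn n).
  have LnM : L n <= M.
    rewrite -lee_fin -(Lint _ (leqnn n)) -(@int_cstP _ _ _ P M).
    apply: le_int_nm => x; rewrite lee_fin; [by have [_ _ ->] := hl' n (leqnn n) | exact: lM].
  have key' c : 0 < c -> (maxe (L1l2_norm P phi n) (ind_norm P phi n) <=
     (L n + (2 * M * L n) * (2 * c)^-1 + c / 2)%:E)%E.
    move=> c0; apply: le_trans (@key _ _ _ P n phi DD EE Df Ef c c0 (fun k hk => (facts k hk).1)) _.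
    rewrite lee_fin.
    have SD : \sum_(k <- iota 1 n) Df k <= L n.
      apply: le_trans (_ : \sum_(k <- iota 1 n) (L k - L k.-1) <= _).
        by rewrite big_seq [X in _ <= X]big_seq; apply: ler_sum => k /facts [].
      by rewrite tele L0 subr0.
    have SE : \sum_(k <- iota 1 n) Ef k <= 2 * M * L n.
      by rewrite /Ef -mulr_sumr; apply: ler_wpM2l => //; rewrite mulr_ge0.
    have k0 : 0 <= (2 * c)^-1 by rewrite invr_ge0; lra.
    have := ler_wpM2r k0 SE; lra.
  have Q0 : 0 <= 2 * M * L n by rewrite !mulr_ge0.
  apply: le_trans (@finish _ _ _ _ Q0 key') _.
  rewrite lee_fin (_ : 2 * M * L n = 2 * (L n * M)); last by ring.
  rewrite sqrtrM // sqrtrM //.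
  have sL := sqr_sqrtr Ln0; have sM := sqr_sqrtr M0.
  have sLM : Num.sqrt (L n) <= Num.sqrt M by rewrite ler_sqrt.
  have := sqrtr_ge0 (L n); have := sqrtr_ge0 (2 : R).
  nra.
Qed.
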